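(* Let $C(c_0)$ be the vector space of all continuous maps $f\colon c_0\to c_0$ (over $\mathbb{R}$), endowed with the linear topology of uniform convergence on bounded subsets of $c_0$. Let $\mathscr{K}(c_0)\subseteq C(c_0)$ be the set of all $f\in C(c_0)$ for which there is no nonempty open interval $I\subseteq\mathbb{R}$ and no differentiable map $u\colon I\to c_0$ with $u'(t)=f(u(t))$ for all $t\in I$. Then $\mathscr{K}(c_0)$ is $\mathfrak{c}$-spaceable in $C(c_0)$; that is, there is a closed linear subspace $V$ of $C(c_0)$ with $\dim V=\mathfrak{c}$ and $V\subseteq \mathscr{K}(c_0)\cup\{0\}$.
   Context: $c_0$ denotes the Banach space of real null sequences with the sup norm. $\mathfrak{c}$ denotes the cardinality of the continuum. For a cardinal $\mu$ and a subset $A$ of a topological vector space $E$, $A$ is called $\mu$-spaceable if $A\cup\{0\}$ contains a closed linear subspace of $E$ of (algebraic) dimension $\mu$. *)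

(* Defs.v *)
From Stdlib Require Import Reals Lra List.
Open Scope R_scope.

Definition c0 : Type := {x : nat -> R | Un_cv x 0}.
Definition c0seq (x : c0) : nat -> R := proj1_sig x.
Coercion c0seq : c0 >-> Funclass.

Lemma cv_const (a : R) : Un_cv (fun _ : nat => a) a.
Proof.
  intros eps He; exists 0%nat; intros n _; unfold R_dist.
  rewrite Rminus_diag_eq, Rabs_R0 by reflexivity; exact He.
Qed.

Lemma c0_zero_cv : Un_cv (fun _ : nat => 0) 0.
Proof. apply cv_const. Qed.

Lemma c0_add_cv (x y : c0) : Un_cv (fun n => x n + y n) 0.
Proof.
  pose proof (CV_plus _ _ _ _ (proj2_sig x) (proj2_sig y)) as H.
  rewrite Rplus_0_r in H; exact H.
Qed.

Lemma c0_scale_cv (a : R) (x : c0) : Un_cv (fun n => a * x n) 0.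
Proof.
  pose proof (CV_mult _ _ _ _ (cv_const a) (proj2_sig x)) as H.
  rewrite Rmult_0_r in H; exact H.
Qed.

Definition c0_zero : c0 := exist _ (fun _ => 0) c0_zero_cv.
Definition c0_add (x y : c0) : c0 := exist _ (fun n => x n + y n) (c0_add_cv x y).
Definition c0_scale (a : R) (x : c0) : c0 := exist _ (fun n => a * x n) (c0_scale_cv a x).

Definition c0map : Type := c0 -> c0.
Definition mzero : c0map := fun _ => c0_zero.
Definition madd (f g : c0map) : c0map := fun x => c0_add (f x) (g x).
Definition mscale (a : R) (f : c0map) : c0map := fun x => c0_scale a (f x).

(** Continuity of f : c_0 -> c_0 w.r.t. the sup norm
    (||y - x|| <= delta  written as  forall n, |y n - x n| <= delta). *)
Definition cont (f : c0map) : Prop :=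
  forall (x : c0) (eps : R), eps > 0 ->
    exists delta, delta > 0 /\
      forall y : c0, (forall n, Rabs (y n - x n) <= delta) ->
        forall n, Rabs (f y n - f x n) <= eps.

(** u : I -> c_0 (I = (a,b)) is differentiable with u'(t) = f(u(t)) on I,
    the derivative being taken in the norm of c_0. *)
Definition is_solution (f : c0map) (a b : R) (u : R -> c0) : Prop :=
  forall t, a < t < b ->
    forall eps, eps > 0 ->
      exists delta, delta > 0 /\
        forall s, a < s < b -> 0 < Rabs (s - t) < delta ->
          forall n, Rabs ((u s n - u t n) / (s - t) - f (u t) n) <= eps.

Definition Kset (f : c0map) : Prop :=
  cont f /\ ~ (exists (a b : R) (u : R -> c0), a < b /\ is_solution f a b u).

(** Closedness of V in C(c_0) for the topology of uniform convergence on
    bounded sets (every bounded set lies in a ball of radius r). *)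
Definition closed_ub (V : c0map -> Prop) : Prop :=
  forall f, cont f ->
    (forall r eps : R, eps > 0 ->
       exists g, V g /\
         forall x : c0, (forall n, Rabs (x n) <= r) ->
           forall n, Rabs (f x n - g x n) <= eps) ->
    V f.

(** Finite linear combinations of a family b indexed by R:
    the list contains (coefficient, index) pairs. *)
Definition lincomb (b : R -> c0map) (l : list (R * R)) : c0map :=
  fold_right (fun p acc => madd (mscale (fst p) (b (snd p))) acc) mzero l.

Definition lin_indep (b : R -> c0map) : Prop :=
  forall l : list (R * R), NoDup (List.map snd l) ->
    lincomb b l = mzero -> Forall (fun p => fst p = 0) l.

Definition linear_subspace (V : c0map -> Prop) : Prop :=
  (forall f, V f -> cont f) /\ V mzero /\
  (forall f g, V f -> V g -> V (madd f g)) /\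
  (forall a f, V f -> V (mscale a f)).

(** V has a Hamel basis in bijection with R, i.e. dim V = continuum. *)
Definition dim_continuum (V : c0map -> Prop) : Prop :=
  exists b : R -> c0map,
    (forall r, V (b r)) /\ lin_indep b /\
    (forall f, V f -> exists l, NoDup (List.map snd l) /\ f = lincomb b l).

(* Main.v *)
Require Import Defs.
From Stdlib Require Import Reals Lra Lia List Classical ProofIrrelevance FunctionalExtensionality.
Open Scope R_scope.


Lemma c0_ext (x y : c0) : (forall n, x n = y n) -> x = y.
Proof.
  destruct x as [x hx], y as [y hy]; simpl; intros H.
  assert (x = y) by (apply functional_extensionality; exact H). subst.
  f_equal; apply proof_irrelevance.
Qed.

Lemma c0map_ext (f g : c0map) : (forall x n, f x n = g x n) -> f = g.
Proof. intros H; apply functional_extensionality; intro x; apply c0_ext, H. Qed.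

Lemma nat_big (A : R) : exists N : nat, A < INR N.
Proof. destruct (INR_archimed 1 A) as [N HN]; [lra|]. exists N; lra. Qed.

Lemma seq_bound_fin (x : nat -> R) (N : nat) : exists M, forall n, (n < N)%nat -> Rabs (x n) <= M.
Proof.
  induction N as [|N [M HM]].
  - exists 0; intros; lia.
  - exists (Rmax M (Rabs (x N))); intros n Hn.
    destruct (Nat.eq_dec n N) as [->|]. apply Rmax_r.
    eapply Rle_trans; [apply HM; lia| apply Rmax_l].
Qed.

Lemma c0_bounded (x : c0) : exists r, forall n, Rabs (x n) <= r.
Proof.
  destruct (proj2_sig x 1) as [N HN]; [lra|].
  destruct (seq_bound_fin x N) as [M HM].
  exists (Rmax M 1); intros n.
  destruct (Nat.lt_ge_cases n N). eapply Rle_trans; [apply HM; lia|apply Rmax_l].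
  specialize (HN n ltac:(lia)). unfold R_dist in HN. rewrite Rminus_0_r in HN.
  change (c0seq x n) with (proj1_sig x n). eapply Rle_trans; [|apply Rmax_r]; lra.
Qed.

Lemma sqrt_holder (a bf : R) : 0 <= a -> 0 <= bf -> Rabs (sqrt a - sqrt bf) <= sqrt (Rabs (a - bf)).
Proof.
  assert (K : forall a bf, 0 <= bf <= a -> sqrt a - sqrt bf <= sqrt (a - bf)).
  { intros a0 b0 [H0 H1].
    assert (sqrt a0 <= sqrt b0 + sqrt (a0 - b0)).
    { rewrite <- (sqrt_Rsqr (sqrt b0 + sqrt (a0 - b0))).
      2:{ pose proof (sqrt_pos b0); pose proof (sqrt_pos (a0-b0)); lra. }
      apply sqrt_le_1_alt. unfold Rsqr.
      pose proof (sqrt_sqrt b0 H0). pose proof (sqrt_sqrt (a0-b0) ltac:(lra)).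
      pose proof (sqrt_pos b0); pose proof (sqrt_pos (a0-b0)). nra. }
    lra. }
  intros Ha Hb. destruct (Rle_dec bf a).
  - rewrite (Rabs_right (a-bf)) by lra.
    assert (sqrt bf <= sqrt a) by (apply sqrt_le_1_alt; lra).
    rewrite Rabs_right by lra. apply K; lra.
  - rewrite (Rabs_left (a-bf)) by lra.
    assert (sqrt a <= sqrt bf) by (apply sqrt_le_1_alt; lra).
    rewrite Rabs_left1 by lra. replace (-(sqrt a - sqrt bf)) with (sqrt bf - sqrt a) by ring.
    replace (-(a-bf)) with (bf-a) by ring. apply K; lra.
Qed.

Lemma rmax_lip (x y : R) : Rabs (Rmax 0 (Rabs y - /2) - Rmax 0 (Rabs x - /2)) <= Rabs (y - x).
Proof.
  pose proof (Rabs_triang_inv y x). pose proof (Rabs_triang_inv x y).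
  rewrite Rabs_minus_sym in H0.
  unfold Rmax; destruct (Rle_dec 0 _), (Rle_dec 0 _);
  apply Rabs_le; split; pose proof (Rabs_pos (y-x)); lra.
Qed.


Definition psi (n : nat) (y : R) : R :=
  sqrt (Rabs y) + / (INR n + 1) + INR n * Rmax 0 (Rabs y - /2).

Lemma psi_lower n y : sqrt (Rabs y) + / (INR n + 1) <= psi n y.
Proof.
  unfold psi. pose proof (pos_INR n). pose proof (Rmax_l 0 (Rabs y - /2)).
  assert (0 <= INR n * Rmax 0 (Rabs y - /2)) by (apply Rmult_le_pos; lra). lra.
Qed.

Lemma psi_even n y : psi n (- y) = psi n y.
Proof. unfold psi; rewrite Rabs_Ropp; reflexivity. Qed.

Lemma sqrt_small (e y : R) : 0 < e -> Rabs y < e * e -> sqrt (Rabs y) < e.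
Proof.
  intros He Hy. rewrite <- (sqrt_square e) by lra.
  apply sqrt_lt_1_alt; split; [apply Rabs_pos|exact Hy].
Qed.

Lemma inv_small (e : R) : 0 < e -> exists N : nat, forall n, (N <= n)%nat -> / (INR n + 1) < e.
Proof.
  intros He. destruct (nat_big (/ e)) as [N HN]. exists N; intros n Hn.
  apply le_INR in Hn. pose proof (pos_INR N).
  rewrite <- (Rinv_inv e). apply Rinv_lt_contravar.
  - apply Rmult_lt_0_compat; [apply Rinv_0_lt_compat; lra| lra].
  - lra.
Qed.

Lemma D_cv (beta : nat -> R) (B : R) (HB : forall n, Rabs (beta n) <= B) (x : c0) :
  Un_cv (fun n => beta n * psi n (x n)) 0.
Proof.
  intros eps He.
  set (B' := Rabs B + 1).
  assert (HB' : 0 < B') by (unfold B'; pose proof (Rabs_pos B); lra).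
  set (e := eps / (3 * B')).
  assert (He' : 0 < e) by (unfold e; apply Rdiv_lt_0_compat; lra).
  destruct (proj2_sig x (Rmin (/4) (e*e))) as [N1 HN1].
  { apply Rmin_pos; nra. }
  destruct (inv_small e He') as [N2 HN2].
  exists (max N1 N2); intros n Hn.
  specialize (HN1 n ltac:(lia)). specialize (HN2 n ltac:(lia)).
  unfold R_dist in *. rewrite Rminus_0_r in *.
  change (proj1_sig x n) with (x n) in HN1.
  pose proof (Rmin_l (/4) (e*e)). pose proof (Rmin_r (/4) (e*e)).
  assert (Hs : sqrt (Rabs (x n)) < e) by (apply sqrt_small; lra).
  assert (Hp : Rabs (psi n (x n)) < 2 * e).
  { unfold psi. rewrite Rmax_left by lra. rewrite Rmult_0_r, Rplus_0_r.
    pose proof (sqrt_pos (Rabs (x n))). pose proof (pos_INR n).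
    assert (0 < / (INR n + 1)) by (apply Rinv_0_lt_compat; lra).
    rewrite Rabs_right by lra. lra. }
  rewrite Rabs_mult.
  assert (Rabs (beta n) < B') by (specialize (HB n); pose proof (Rle_abs B); unfold B'; lra).
  assert (eps = 3 * B' * e) by (unfold e; field; lra).
  pose proof (Rabs_pos (beta n)). pose proof (Rabs_pos (psi n (x n))). nra.
Qed.

Lemma D_cont (beta : nat -> R) (B : R) (HB : forall n, Rabs (beta n) <= B) (x : c0) (eps : R) :
  eps > 0 -> exists delta, delta > 0 /\
    forall y : c0, (forall n, Rabs (y n - x n) <= delta) ->
      forall n, Rabs (beta n * psi n (y n) - beta n * psi n (x n)) <= eps.
Proof.
  intros He.
  set (B' := Rabs B + 1).
  assert (HB' : 0 < B') by (unfold B'; pose proof (Rabs_pos B); lra).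
  set (e := eps / (2 * B')).
  assert (He' : 0 < e) by (unfold e; apply Rdiv_lt_0_compat; lra).
  destruct (proj2_sig x (/4)) as [N HN]; [lra|].
  assert (HN0 : 0 < INR N + 1) by (pose proof (pos_INR N); lra).
  set (d := Rmin (/4) (Rmin (e*e) (e / (INR N + 1)))).
  assert (Hd1 : d <= /4) by apply Rmin_l.
  assert (Hd2 : d <= e*e) by (eapply Rle_trans; [apply Rmin_r|apply Rmin_l]).
  assert (Hd3 : d <= e / (INR N + 1)) by (eapply Rle_trans; [apply Rmin_r|apply Rmin_r]).
  assert (Hd : d > 0).
  { unfold d; apply Rmin_pos; [lra|apply Rmin_pos; [nra|apply Rdiv_lt_0_compat; lra]]. }
  exists d; split; [exact Hd|]. intros y Hy n.
  specialize (Hy n).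
  assert (Hsq : Rabs (sqrt (Rabs (y n)) - sqrt (Rabs (x n))) <= e).
  { eapply Rle_trans; [apply sqrt_holder; apply Rabs_pos|].
    rewrite <- (sqrt_square e) by lra. apply sqrt_le_1_alt.
    pose proof (Rabs_triang_inv (y n) (x n)). pose proof (Rabs_triang_inv (x n) (y n)).
    rewrite Rabs_minus_sym in H0. apply Rabs_le; lra. }
  assert (Hm : Rabs (INR n * Rmax 0 (Rabs (y n) - /2) - INR n * Rmax 0 (Rabs (x n) - /2)) <= e).
  { destruct (Nat.lt_ge_cases n N).
    - rewrite <- Rmult_minus_distr_l, Rabs_mult, Rabs_right by (apply Rle_ge, pos_INR).
      pose proof (rmax_lip (x n) (y n)). apply lt_INR in H.
      assert (INR n * d <= e).
      { apply Rle_trans with ((INR N + 1) * d). apply Rmult_le_compat_r; lra.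
        apply Rmult_le_reg_l with (/ (INR N + 1)). apply Rinv_0_lt_compat; lra.
        rewrite <- Rmult_assoc, Rinv_l, Rmult_1_l by lra. unfold Rdiv in Hd3. lra. }
      pose proof (pos_INR n). pose proof (Rabs_pos (Rmax 0 (Rabs (y n) - / 2) - Rmax 0 (Rabs (x n) - / 2))).
      nra.
    - specialize (HN n H). unfold R_dist in HN; rewrite Rminus_0_r in HN.
      change (proj1_sig x n) with (x n) in HN.
      pose proof (Rabs_triang_inv (y n) (x n)).
      rewrite (Rmax_left 0 (Rabs (y n) - /2)) by lra.
      rewrite (Rmax_left 0 (Rabs (x n) - /2)) by lra.
      rewrite !Rmult_0_r, Rminus_0_r, Rabs_R0; lra. }
  rewrite <- Rmult_minus_distr_l, Rabs_mult.
  assert (Hp : Rabs (psi n (y n) - psi n (x n)) <= 2 * e).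
  { unfold psi.
    replace (sqrt (Rabs (y n)) + / (INR n + 1) + INR n * Rmax 0 (Rabs (y n) - / 2) -
      (sqrt (Rabs (x n)) + / (INR n + 1) + INR n * Rmax 0 (Rabs (x n) - / 2)))
    with ((sqrt (Rabs (y n)) - sqrt (Rabs (x n))) +
          (INR n * Rmax 0 (Rabs (y n) - / 2) - INR n * Rmax 0 (Rabs (x n) - / 2))) by ring.
    eapply Rle_trans; [apply Rabs_triang|lra]. }
  assert (Rabs (beta n) <= B') by (specialize (HB n); pose proof (Rle_abs B); unfold B'; lra).
  assert (eps = 2 * B' * e) by (unfold e; field; lra).
  pose proof (Rabs_pos (beta n)). pose proof (Rabs_pos (psi n (y n) - psi n (x n))). nra.
Qed.


Definition phi (r : R) : R := / 2 + r / (2 * (1 + Rabs r)).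

Lemma phi_range r : 0 < phi r < 1.
Proof.
  unfold phi. pose proof (Rabs_pos r).
  assert (Rabs (r / (2 * (1 + Rabs r))) < /2).
  { unfold Rdiv; rewrite Rabs_mult, Rabs_inv, (Rabs_right (2 * _)) by lra.
    apply Rmult_lt_reg_r with (2 * (1 + Rabs r)); [lra|].
    rewrite Rmult_assoc, Rinv_l by lra. lra. }
  apply Rabs_def2 in H0. lra.
Qed.

Lemma phi_inj r s : phi r = phi s -> r = s.
Proof.
  unfold phi; intros H.
  assert (E : r * (1 + Rabs s) = s * (1 + Rabs r)).
  { assert (r / (2 * (1 + Rabs r)) = s / (2 * (1 + Rabs s))) by lra.
    pose proof (Rabs_pos r); pose proof (Rabs_pos s).
    unfold Rdiv in H0.
    apply Rmult_eq_reg_r with (/ (2 * (1 + Rabs r) * (1 + Rabs s))).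
    2: apply Rinv_neq_0_compat; nra.
    replace (r * (1 + Rabs s) * / (2 * (1 + Rabs r) * (1 + Rabs s))) with (r * / (2 * (1 + Rabs r))) by (field; lra).
    replace (s * (1 + Rabs r) * / (2 * (1 + Rabs r) * (1 + Rabs s))) with (s * / (2 * (1 + Rabs s))) by (field; lra).
    exact H0. }
  destruct (Rle_dec 0 r), (Rle_dec 0 s).
  - rewrite Rabs_right in E by lra. rewrite Rabs_right in E by lra. nra.
  - rewrite (Rabs_right r) in E by lra. rewrite (Rabs_left s) in E by lra. nra.
  - rewrite (Rabs_left r) in E by lra. rewrite (Rabs_right s) in E by lra. nra.
  - rewrite Rabs_left in E by lra. rewrite Rabs_left in E by lra. nra.
Qed.

Definition cond (r : R) (k m : nat) : Prop := INR m <= 2 ^ k * phi r < INR m + 1.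

Definition cf (r : R) (n : nat) : R :=
  let k := Nat.log2 n in let m := (n - 2 ^ k)%nat in
  if Rle_dec (INR m) (2 ^ k * phi r) then
    if Rlt_dec (2 ^ k * phi r) (INR m + 1) then 1 else 0 else 0.

Lemma cf_bound r n : Rabs (cf r n) <= 1.
Proof.
  unfold cf; destruct Rle_dec; [destruct Rlt_dec|];
  try rewrite Rabs_R1; try rewrite Rabs_R0; lra.
Qed.

Lemma pow2_pos k : 0 < 2 ^ k.
Proof. apply pow_lt; lra. Qed.

Lemma cond_lt r k m : cond r k m -> (m < 2 ^ k)%nat.
Proof.
  intros [H1 H2]. pose proof (phi_range r). pose proof (pow2_pos k).
  apply INR_lt. rewrite pow_INR. replace (INR 2) with 2 by (simpl; lra). nra.
Qed.

Lemma log2_block k m : (m < 2 ^ k)%nat -> Nat.log2 (2 ^ k + m) = k.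
Proof.
  intros H. apply Nat.log2_unique; [lia|]. rewrite Nat.pow_succ_r'. lia.
Qed.

Lemma cf_block r k m : (m < 2 ^ k)%nat ->
  cf r (2 ^ k + m) = if Rle_dec (INR m) (2 ^ k * phi r) then
    if Rlt_dec (2 ^ k * phi r) (INR m + 1) then 1 else 0 else 0.
Proof.
  intros H. unfold cf. rewrite log2_block by exact H.
  replace (2 ^ k + m - 2 ^ k)%nat with m by lia. reflexivity.
Qed.

Lemma cf_one r k m : cond r k m -> cf r (2 ^ k + m) = 1.
Proof.
  intros Hc. rewrite cf_block by (eapply cond_lt; eauto). destruct Hc.
  destruct Rle_dec; [destruct Rlt_dec|]; lra.
Qed.

Lemma cf_zero r k m : (m < 2 ^ k)%nat -> ~ cond r k m -> cf r (2 ^ k + m) = 0.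
Proof.
  intros H Hc. rewrite cf_block by exact H.
  destruct Rle_dec; [destruct Rlt_dec|]; try reflexivity. exfalso; apply Hc; split; lra.
Qed.

Lemma cond_exists r k : exists m, cond r k m.
Proof.
  set (x := 2 ^ k * phi r).
  assert (Hx : 0 <= x) by (unfold x; pose proof (phi_range r); pose proof (pow2_pos k); nra).
  destruct (nat_big x) as [N HN].
  revert HN; induction N as [|N IH]; intros HN.
  - simpl in HN; lra.
  - destruct (Rle_dec (INR N) x).
    + exists N; split; [exact r0|]. rewrite S_INR in HN; exact HN.
    + apply IH; lra.
Qed.

Lemma pow2_big (A : R) : exists K : nat, forall k, (K <= k)%nat -> A < 2 ^ k.
Proof.
  destruct (nat_big A) as [K HK]. exists K; intros k Hk.
  assert (forall j, INR j < 2 ^ j).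
  { induction j. simpl; lra. rewrite S_INR; simpl.
    pose proof (pow2_pos j). destruct j. simpl; lra. pose proof (pos_INR (S j)). 
    assert (1 <= 2 ^ S j) by (apply pow_R1_Rle; lra). lra. }
  apply le_INR in Hk. specialize (H k). lra.
Qed.

Lemma cond_distinct r s : r <> s -> exists K, forall k, (K <= k)%nat -> forall m, cond r k m -> ~ cond s k m.
Proof.
  intros Hrs.
  assert (Hd : phi r - phi s <> 0) by (intro; apply Hrs, phi_inj; lra).
  destruct (pow2_big (/ Rabs (phi r - phi s))) as [K HK].
  exists K; intros k Hk m [H1 H2] [H3 H4].
  specialize (HK k Hk).
  assert (Rabs (2 ^ k * (phi r - phi s)) < 1) by (apply Rabs_def1; lra).
  rewrite Rabs_mult, (Rabs_right (2^k)) in H by (apply Rle_ge, Rlt_le, pow2_pos).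
  assert (0 < Rabs (phi r - phi s)) by (apply Rabs_pos_lt; exact Hd).
  apply (Rmult_lt_compat_r (Rabs (phi r - phi s))) in HK; [|exact H0].
  rewrite Rinv_l in HK by lra. lra.
Qed.


Definition bf (r : R) : c0map :=
  fun x => exist _ (fun n => cf r n * psi n (x n)) (D_cv (cf r) 1 (cf_bound r) x).

Definition beta (l : list (R * R)) (n : nat) : R :=
  fold_right (fun p acc => fst p * cf (snd p) n + acc) 0 l.

Lemma lincomb_eq l x n : lincomb bf l x n = beta l n * psi n (x n).
Proof.
  induction l as [|p t IH]; simpl.
  - ring.
  - unfold madd, mscale, c0_add, c0_scale, c0seq in *; simpl in *. rewrite IH. ring.
Qed.

Definition rmv (r : R) (l : list (R * R)) :=
  filter (fun p => if Req_EM_T (snd p) r then false else true) l.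
Definition coef (r : R) (l : list (R * R)) :=
  fold_right (fun p acc => (if Req_EM_T (snd p) r then fst p else 0) + acc) 0 l.

Lemma beta_split r l n : beta l n = coef r l * cf r n + beta (rmv r l) n.
Proof.
  induction l as [|p t IH]; simpl. ring.
  destruct (Req_EM_T (snd p) r) as [e|e]; simpl; rewrite IH; [rewrite e|]; ring.
Qed.

Lemma remove_In r l p : In p (rmv r l) -> snd p <> r /\ In p l.
Proof.
  unfold rmv; rewrite filter_In. intros [H1 H2]; split; [|exact H1].
  destruct (Req_EM_T (snd p) r); [discriminate|exact n].
Qed.

Lemma remove_length r l : (length (rmv r l) <= length l)%nat.
Proof. unfold rmv. induction l; simpl; [lia|]. destruct (Req_EM_T _ _); simpl; lia. Qed.

Lemma merge : forall l, exists l', NoDup (map snd l') /\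
  (forall x, In x (map snd l') -> In x (map snd l)) /\ forall n, beta l' n = beta l n.
Proof.
  assert (forall N l, (length l <= N)%nat -> exists l', NoDup (map snd l') /\
    (forall x, In x (map snd l') -> In x (map snd l)) /\ forall n, beta l' n = beta l n).
  { induction N as [|N IH]; intros l Hl.
    - destruct l; simpl in Hl; [|lia]. exists nil; simpl; repeat split; auto. constructor.
    - destruct l as [|[a r] t].
      + exists nil; simpl; repeat split; auto. constructor.
      + simpl in Hl. destruct (IH (rmv r t)) as [t' [H1 [H2 H3]]].
        { pose proof (remove_length r t); lia. }
        exists ((a + coef r t, r) :: t'). simpl. repeat split.
        * constructor; [|exact H1]. intro Hin. apply H2 in Hin.
          apply in_map_iff in Hin. destruct Hin as [p [Hp Hin]].
          apply remove_In in Hin. destruct Hin; contradiction.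
        * intros x [Hx|Hx]; [left; exact Hx|right].
          apply H2, in_map_iff in Hx. destruct Hx as [p [Hp Hin]].
          apply remove_In in Hin. apply in_map_iff. exists p; tauto.
        * intros n. rewrite H3, (beta_split r t n). ring. }
  intros l; apply (H (length l)); lia.
Qed.

Lemma coef_notin r l : ~ In r (map snd l) -> coef r l = 0.
Proof.
  induction l as [|p t IH]; simpl; intros H; [reflexivity|].
  destruct (Req_EM_T (snd p) r). exfalso; apply H; left; exact e.
  rewrite IH by tauto. ring.
Qed.

Lemma coef_nodup l p : NoDup (map snd l) -> In p l -> coef (snd p) l = fst p.
Proof.
  induction l as [|q t IH]; simpl; intros Hn Hin; [contradiction|].
  inversion Hn as [|? ? Hq Ht]; subst.
  destruct Hin as [->|Hin].
  - destruct (Req_EM_T (snd p) (snd p)); [|congruence]. rewrite coef_notin by exact Hq. ring.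
  - destruct (Req_EM_T (snd q) (snd p)) as [e|e].
    + exfalso; apply Hq. rewrite e. apply in_map; exact Hin.
    + rewrite IH by assumption. ring.
Qed.

Lemma beta_zero_rest r : forall l, (forall p, In p l -> snd p <> r) ->
  exists K, forall k, (K <= k)%nat -> forall m, cond r k m -> beta l (2 ^ k + m) = 0.
Proof.
  induction l as [|p t IH]; intros H.
  - exists 0%nat; intros; reflexivity.
  - destruct IH as [K2 HK2]. { intros q Hq; apply H; right; exact Hq. }
    destruct (cond_distinct r (snd p)) as [K1 HK1].
    { intro e; apply (H p); [left; reflexivity|symmetry; exact e]. }
    exists (max K1 K2); intros k Hk m Hc. simpl.
    rewrite (cf_zero (snd p) k m (cond_lt _ _ _ Hc)).
    2: apply (HK1 k ltac:(lia) m Hc).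
    rewrite (HK2 k ltac:(lia) m Hc). ring.
Qed.

Lemma inf_often l r : forall N, exists n, (N <= n)%nat /\ beta l n = coef r l.
Proof.
  intros N.
  destruct (beta_zero_rest r (rmv r l)) as [K HK].
  { intros p Hp; apply remove_In in Hp; tauto. }
  set (k := max K N). destruct (cond_exists r k) as [m Hm].
  exists (2 ^ k + m)%nat; split.
  - pose proof (Nat.pow_gt_lin_r 2 k ltac:(lia)). lia.
  - rewrite (beta_split r l), cf_one with (m := m) by exact Hm.
    rewrite (HK k ltac:(lia) m Hm). ring.
Qed.


Lemma ode_bound (v d : R -> R) (p q k : R) : p < q -> k > 0 ->
  (forall s, p <= s <= q -> derivable_pt_lim v s (d s)) ->
  (forall s, p <= s <= q -> k * sqrt (Rabs (v s)) <= d s /\ 0 < d s) ->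
  (k * (q - p) / 8) ^ 2 <= Rabs (v p) \/ (k * (q - p) / 8) ^ 2 <= Rabs (v q).
Proof.
  intros Hpq Hk Hder Hd.
  assert (Hinc : forall s t, p <= s -> s < t -> t <= q -> v s < v t).
  { intros s t H1 H2 H3.
    destruct (MVT_cor2 v d s t H2) as [c [Hc1 Hc2]].
    { intros c Hc; apply Hder; lra. }
    destruct (Hd c ltac:(lra)). nra. }
  set (m := (p + q) / 2).
  assert (Hkq : 0 < k * (q - p) / 8) by (apply Rdiv_lt_0_compat; [nra|lra]).
  destruct (Rle_dec 0 (v m)) as [Hm|Hm].
  - right. set (m' := (p + 3 * q) / 4).
    assert (Hpos : forall s, m' <= s <= q -> 0 < v s).
    { intros s Hs. pose proof (Hinc m s ltac:(unfold m; lra) ltac:(unfold m, m' in *; lra) ltac:(lra)). lra. }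
    destruct (MVT_cor2 (comp sqrt v) (fun c => / (2 * sqrt (v c)) * d c) m' q) as [c [Hc1 Hc2]].
    { unfold m'; lra. }
    { intros c Hc. apply derivable_pt_lim_comp. apply Hder; unfold m' in *; lra.
      apply derivable_pt_lim_sqrt, Hpos; exact Hc. }
    unfold comp in Hc1.
    assert (Hvc : 0 < v c) by (apply Hpos; lra).
    assert (Hsc : 0 < sqrt (v c)) by (apply sqrt_lt_R0; exact Hvc).
    destruct (Hd c ltac:(unfold m' in *; lra)) as [Hd1 _].
    rewrite Rabs_right in Hd1 by lra.
    assert (k / 2 <= / (2 * sqrt (v c)) * d c).
    { apply Rmult_le_reg_l with (2 * sqrt (v c)); [lra|].
      rewrite <- Rmult_assoc, Rinv_r, Rmult_1_l by lra. 
      replace (2 * sqrt (v c) * (k / 2)) with (k * sqrt (v c)) by field. exact Hd1. }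
    pose proof (sqrt_pos (v m')).
    assert (k * (q - p) / 8 <= sqrt (v q)).
    { assert (k / 2 * (q - m') <= / (2 * sqrt (v c)) * d c * (q - m')).
      { apply Rmult_le_compat_r; [unfold m'; lra|exact H]. }
      unfold m' in *. lra. }
    assert (Hvq : 0 < v q) by (apply Hpos; unfold m'; lra).
    rewrite Rabs_right by lra.
    rewrite <- (sqrt_sqrt (v q)) by lra. simpl. rewrite Rmult_1_r.
    apply Rmult_le_compat; lra.
  - left. set (m' := (3 * p + q) / 4).
    assert (Hneg : forall s, p <= s <= m' -> v s < 0).
    { intros s Hs. pose proof (Hinc s m ltac:(lra) ltac:(unfold m, m' in *; lra) ltac:(unfold m; lra)). lra. }
    destruct (MVT_cor2 (comp sqrt (opp_fct v)) (fun c => / (2 * sqrt (- v c)) * - d c) p m') as [c [Hc1 Hc2]].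
    { unfold m'; lra. }
    { intros c Hc. apply derivable_pt_lim_comp. apply derivable_pt_lim_opp. apply Hder; unfold m' in *; lra.
      apply derivable_pt_lim_sqrt. unfold opp_fct. pose proof (Hneg c Hc); lra. }
    unfold comp, opp_fct in Hc1.
    assert (Hvc : 0 < - v c) by (pose proof (Hneg c ltac:(lra)); lra).
    assert (Hsc : 0 < sqrt (- v c)) by (apply sqrt_lt_R0; exact Hvc).
    destruct (Hd c ltac:(unfold m' in *; lra)) as [Hd1 _].
    rewrite Rabs_left in Hd1 by lra.
    assert (/ (2 * sqrt (- v c)) * - d c <= - (k / 2)).
    { apply Rmult_le_reg_l with (2 * sqrt (- v c)); [lra|].
      rewrite <- Rmult_assoc, Rinv_r, Rmult_1_l by lra.
      replace (2 * sqrt (- v c) * - (k / 2)) with (- (k * sqrt (- v c))) by field. lra. }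
    pose proof (sqrt_pos (- v m')).
    assert (k * (q - p) / 8 <= sqrt (- v p)).
    { assert (/ (2 * sqrt (- v c)) * - d c * (m' - p) <= - (k / 2) * (m' - p)).
      { apply Rmult_le_compat_r; [unfold m'; lra|exact H]. }
      unfold m' in *. lra. }
    assert (Hvp : 0 < - v p) by (pose proof (Hneg p ltac:(unfold m'; lra)); lra).
    rewrite Rabs_left by lra.
    rewrite <- (sqrt_sqrt (- v p)) by lra. simpl. rewrite Rmult_1_r.
    apply Rmult_le_compat; lra.
Qed.


Lemma beta_bound l : exists B, forall n, Rabs (beta l n) <= B.
Proof.
  induction l as [|p t [B HB]]; simpl.
  - exists 0; intros; rewrite Rabs_R0; lra.
  - exists (Rabs (fst p) + B); intros n.
    eapply Rle_trans; [apply Rabs_triang|]. rewrite Rabs_mult.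
    pose proof (cf_bound (snd p) n). pose proof (Rabs_pos (fst p)). specialize (HB n).
    pose proof (Rabs_pos (cf (snd p) n)). nra.
Qed.

Lemma cont_lincomb l : cont (lincomb bf l).
Proof.
  intros x eps He. destruct (beta_bound l) as [B HB].
  destruct (D_cont (beta l) B HB x eps He) as [d [Hd H]].
  exists d; split; [exact Hd|]. intros y Hy n. rewrite !lincomb_eq. apply H; exact Hy.
Qed.

Lemma beta_app l1 l2 n : beta (l1 ++ l2) n = beta l1 n + beta l2 n.
Proof. induction l1; simpl; [ring|rewrite IHl1; ring]. Qed.

Lemma beta_scale a l n : beta (map (fun p => (a * fst p, snd p)) l) n = a * beta l n.
Proof. induction l; simpl; [ring|rewrite IHl; simpl; ring]. Qed.

Lemma beta_allzero l n : (forall p, In p l -> fst p = 0) -> beta l n = 0.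
Proof.
  induction l as [|p t IH]; simpl; intros H; [reflexivity|].
  rewrite H by (left; reflexivity). rewrite IH by (intros; apply H; right; assumption). ring.
Qed.

Lemma nonzero_wit l : lincomb bf l <> mzero ->
  exists a, a <> 0 /\ forall N, exists n, (N <= n)%nat /\ beta l n = a.
Proof.
  intros Hnz. destruct (merge l) as [l' [H1 [_ H3]]].
  destruct (classic (exists p, In p l' /\ fst p <> 0)) as [[p [Hp Hf]]|Hno].
  - exists (fst p); split; [exact Hf|]. intros N.
    destruct (inf_often l' (snd p) N) as [n [Hn Hb]]. exists n; split; [exact Hn|].
    rewrite <- H3, Hb. apply coef_nodup; assumption.
  - exfalso; apply Hnz. apply c0map_ext; intros x n. rewrite lincomb_eq, <- H3, beta_allzero.
    + simpl. ring.
    + intros p Hp. apply NNPP; intro; apply Hno; exists p; tauto.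
Qed.

Lemma e_cv (k : nat) : Un_cv (fun j => if Nat.eq_dec j k then 1 else 0) 0.
Proof.
  intros eps He. exists (S k); intros n Hn. destruct (Nat.eq_dec n k); [lia|].
  unfold R_dist; rewrite Rminus_0_r, Rabs_R0; lra.
Qed.

Definition unitv (k : nat) : c0 := exist (fun x => Un_cv x 0) _ (e_cv k).

Lemma unbounded l : lincomb bf l <> mzero -> forall M, exists x : c0,
  (forall n, Rabs (x n) <= 1) /\ exists n, M < Rabs (lincomb bf l x n).
Proof.
  intros Hnz M. destruct (nonzero_wit l Hnz) as [a [Ha Hinf]].
  assert (Hpa : 0 < Rabs a) by (apply Rabs_pos_lt; exact Ha).
  destruct (nat_big (2 * Rabs M / Rabs a)) as [N HN].
  destruct (Hinf N) as [n [Hn Hb]].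
  exists (unitv n); split.
  - intros j. unfold unitv, c0seq; simpl. destruct (Nat.eq_dec j n); rewrite ?Rabs_R1, ?Rabs_R0; lra.
  - exists n. rewrite lincomb_eq, Hb. unfold unitv, c0seq; simpl.
    destruct (Nat.eq_dec n n); [|congruence].
    assert (Hpsi : INR n / 2 <= psi n 1).
    { unfold psi. rewrite Rabs_R1, sqrt_1, Rmax_right by lra. pose proof (pos_INR n).
      assert (0 < / (INR n + 1)) by (apply Rinv_0_lt_compat; lra). lra. }
    apply le_INR in Hn. pose proof (pos_INR n).
    rewrite Rabs_mult, (Rabs_right (psi n 1)) by lra.
    assert (2 * Rabs M < Rabs a * INR n).
    { assert (2 * Rabs M / Rabs a * Rabs a = 2 * Rabs M) by (field; lra). nra. }
    pose proof (Rle_abs M). nra.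
Qed.

Definition VV (f : c0map) : Prop := exists l, f = lincomb bf l.

Lemma V_add f g : VV f -> VV g -> VV (madd f g).
Proof.
  intros [l1 ->] [l2 ->]. exists (l1 ++ l2). apply c0map_ext; intros x n.
  rewrite lincomb_eq, beta_app. unfold madd, c0_add, c0seq; simpl.
  change (proj1_sig (lincomb bf l1 x) n) with (lincomb bf l1 x n).
  change (proj1_sig (lincomb bf l2 x) n) with (lincomb bf l2 x n).
  rewrite !lincomb_eq. change (proj1_sig x n) with (x n). ring.
Qed.

Lemma V_scale a f : VV f -> VV (mscale a f).
Proof.
  intros [l ->]. exists (map (fun p => (a * fst p, snd p)) l). apply c0map_ext; intros x n.
  rewrite lincomb_eq, beta_scale. unfold mscale, c0_scale, c0seq; simpl.
  change (proj1_sig (lincomb bf l x) n) with (lincomb bf l x n).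
  rewrite lincomb_eq. change (proj1_sig x n) with (x n). ring.
Qed.

Lemma V_closed : closed_ub VV.
Proof.
  intros f Hf H.
  destruct (H 1 1 ltac:(lra)) as [g0 [Hg0 H0]].
  assert (Hall : forall r eps, eps > 0 -> forall x : c0, (forall n, Rabs (x n) <= r) ->
             forall n, Rabs (f x n - g0 x n) <= eps).
  { intros r eps He x Hx n.
    destruct (H (Rmax r 1) eps He) as [g [Hg H1]].
    assert (Heq : madd g (mscale (-1) g0) = mzero).
    { apply NNPP; intro Hnz.
      destruct Hg as [lg ->]. destruct Hg0 as [l0 Hl0].
      assert (Hv : VV (madd (lincomb bf lg) (mscale (-1) g0))) by (apply V_add; [exists lg; reflexivity|apply V_scale; exists l0; exact Hl0]).
      destruct Hv as [lh Hlh]. rewrite Hlh in Hnz.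
      destruct (unbounded lh Hnz (eps + 1)) as [y [Hy [j Hj]]].
      rewrite <- Hlh in Hj. unfold madd, mscale, c0_add, c0_scale, c0seq in Hj; simpl in Hj.
      fold (c0seq (lincomb bf lg y)) (c0seq (g0 y)) in Hj.
      assert (Hy' : forall n, Rabs (y n) <= Rmax r 1) by (intro; eapply Rle_trans; [apply Hy|apply Rmax_r]).
      specialize (H1 y Hy' j). specialize (H0 y Hy j).
      replace (c0seq (lincomb bf lg y) j + -1 * c0seq (g0 y) j) with
        ((c0seq (lincomb bf lg y) j - f y j) + (f y j - g0 y j)) in Hj by ring.
      pose proof (Rabs_triang (c0seq (lincomb bf lg y) j - f y j) (f y j - g0 y j)).
      rewrite Rabs_minus_sym in H1. lra. }
    assert (Hx' : forall n, Rabs (x n) <= Rmax r 1) by (intro; eapply Rle_trans; [apply Hx|apply Rmax_l]).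
    specialize (H1 x Hx' n).
    assert (E : madd g (mscale (-1) g0) x n = 0) by (rewrite Heq; reflexivity).
    unfold madd, mscale, c0_add, c0_scale, c0seq in E; simpl in E.
    fold (c0seq (g x)) (c0seq (g0 x)) in E.
    replace (g0 x n) with (g x n) by lra. exact H1. }
  replace f with g0; [exact Hg0|].
  apply c0map_ext; intros x n. destruct (c0_bounded x) as [r Hr].
  apply NNPP; intro Hne.
  assert (Hpos : Rabs (f x n - g0 x n) > 0) by (apply Rabs_pos_lt; intro; apply Hne; lra).
  specialize (Hall r (Rabs (f x n - g0 x n) / 2) ltac:(lra) x Hr n). lra.
Qed.

Lemma sol_deriv f a b' u n t : is_solution f a b' u -> a < t < b' ->
  derivable_pt_lim (fun s => u s n) t (f (u t) n).
Proof.
  intros Hs Ht eps He.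
  destruct (Hs t Ht (eps / 2) ltac:(lra)) as [d [Hd H]].
  assert (Hpos : 0 < Rmin d (Rmin (t - a) (b' - t))) by (apply Rmin_pos; [lra|apply Rmin_pos; lra]).
  exists (mkposreal _ Hpos). intros h Hh Hlt. simpl in Hlt.
  pose proof (Rmin_l d (Rmin (t - a) (b' - t))).
  pose proof (Rmin_r d (Rmin (t - a) (b' - t))).
  pose proof (Rmin_l (t - a) (b' - t)). pose proof (Rmin_r (t - a) (b' - t)).
  assert (Hh' : Rabs h < t - a /\ Rabs h < b' - t) by lra.
  destruct Hh' as [Ha Hb]. apply Rabs_def2 in Ha. apply Rabs_def2 in Hb.
  assert (Hs' : a < t + h < b') by lra.
  assert (Hd' : 0 < Rabs (t + h - t) < d).
  { replace (t + h - t) with h by ring. split; [apply Rabs_pos_lt; exact Hh|lra]. }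
  specialize (H (t + h) Hs' Hd' n). replace (t + h - t) with h in H by ring. lra.
Qed.

Lemma no_solution l : lincomb bf l <> mzero ->
  ~ (exists (a b' : R) (u : R -> c0), a < b' /\ is_solution (lincomb bf l) a b' u).
Proof.
  intros Hnz [a [b' [u [Hab Hs]]]].
  destruct (nonzero_wit l Hnz) as [a0 [Ha0 Hinf]].
  set (p := (3 * a + b') / 4). set (q := (a + 3 * b') / 4).
  set (k := Rabs a0).
  assert (Hk : k > 0) by (apply Rabs_pos_lt; exact Ha0).
  set (eta := (k * (q - p) / 8) ^ 2).
  assert (Heta : 0 < eta).
  { unfold eta. apply pow_lt. apply Rdiv_lt_0_compat; [|lra]. unfold p, q. nra. }
  destruct (proj2_sig (u p) eta Heta) as [N1 HN1].
  destruct (proj2_sig (u q) eta Heta) as [N2 HN2].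
  destruct (Hinf (max N1 N2)) as [n [Hn Hb]].
  specialize (HN1 n ltac:(lia)). specialize (HN2 n ltac:(lia)).
  unfold R_dist in *; rewrite Rminus_0_r in *.
  set (sg := if Rle_dec 0 a0 then 1 else -1).
  assert (Hsg : sg * a0 = k /\ Rabs sg = 1).
  { unfold sg, k; destruct (Rle_dec 0 a0).
    - rewrite Rabs_R1, Rabs_right by lra. split; ring.
    - rewrite (Rabs_left (-1)) by lra. rewrite (Rabs_left a0) by lra. split; ring. }
  destruct Hsg as [Hsg1 Hsg2].
  destruct (ode_bound (mult_real_fct sg (fun s => u s n))
      (fun s => sg * lincomb bf l (u s) n) p q k) as [Hc|Hc].
  - unfold p, q; lra.
  - exact Hk.
  - intros s Hs'. apply derivable_pt_lim_scal. apply (sol_deriv _ a b'); [exact Hs|unfold p, q in *; lra].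
  - intros s _. unfold mult_real_fct. rewrite lincomb_eq, Hb, <- Rmult_assoc, Hsg1.
    rewrite Rabs_mult, Hsg2, Rmult_1_l.
    pose proof (psi_lower n (u s n)). pose proof (pos_INR n).
    assert (0 < / (INR n + 1)) by (apply Rinv_0_lt_compat; lra).
    pose proof (sqrt_pos (Rabs (u s n))). split; nra.
  - unfold mult_real_fct in Hc. rewrite Rabs_mult, Hsg2, Rmult_1_l in Hc.
    change (proj1_sig (u p) n) with (u p n) in HN1. fold eta in Hc. lra.
  - unfold mult_real_fct in Hc. rewrite Rabs_mult, Hsg2, Rmult_1_l in Hc.
    change (proj1_sig (u q) n) with (u q n) in HN2. fold eta in Hc. lra.
Qed.

Theorem theorem2p1 :
  exists V : c0map -> Prop,
    linear_subspace V /\ closed_ub V /\ dim_continuum V /\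
    (forall f, V f -> f <> mzero -> Kset f).
Proof.
  exists VV. split; [|split; [exact V_closed|split]].
  - split; [intros f [l ->]; apply cont_lincomb|].
    split; [exists nil; reflexivity|].
    split; [exact V_add|exact V_scale].
  - exists bf. split; [|split].
    + intros r. exists ((1, r) :: nil). apply c0map_ext; intros x n.
      rewrite lincomb_eq. simpl. unfold c0seq; simpl. ring.
    + intros l Hnd Hz. apply Forall_forall; intros p Hp.
      apply NNPP; intro Hf.
      destruct (inf_often l (snd p) 0%nat) as [n [_ Hb]].
      rewrite coef_nodup in Hb by assumption.
      assert (E : lincomb bf l c0_zero n = 0) by (rewrite Hz; reflexivity).
      rewrite lincomb_eq, Hb in E.
      pose proof (psi_lower n (c0_zero n)). pose proof (pos_INR n).
      assert (0 < / (INR n + 1)) by (apply Rinv_0_lt_compat; lra).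
      pose proof (sqrt_pos (Rabs (c0_zero n))).
      apply Rmult_integral in E. destruct E; [contradiction|lra].
    + intros f [l ->]. destruct (merge l) as [l' [H1 [_ H3]]].
      exists l'; split; [exact H1|]. apply c0map_ext; intros x n.
      rewrite !lincomb_eq, H3. reflexivity.
  - intros f [l ->] Hnz. split; [apply cont_lincomb|]. apply no_solution; exact Hnz.
Qed.
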